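(* Let $C>0$ and let $n\ge N\ge1$ be integers. Let $\mathcal{C}^+_{n,C}=\{f\in\mathbb{R}^n: -C\le f[1]\le\dots\le f[n]\le C\}$. For $j=0,\dots,N-1$ define $h_j^+\in\mathbb{R}^n$ by $h_j^+[i]=0$ if $i\le\lfloor jn/N\rfloor$ and $h_j^+[i]=1$ otherwise, and let $H_+=\mathrm{span}(h_0^+,\dots,h_{N-1}^+)$. Set $\delta=2\sqrt2\,C/\sqrt N$. Then for every $f\in\mathcal{C}^+_{n,C}$, $$\inf_{h\in H_+}\|f-h\|_n\le\delta,$$ where $\|v\|_n^2=\frac1n\sum_{i=1}^nv[i]^2$. *)

(* Defs.v *)
From HB Require Import structures.
From mathcomp Require Import all_boot all_order all_algebra.
From mathcomp Require Import all_classical all_reals.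
Set Implicit Arguments. Unset Strict Implicit. Unset Printing Implicit Defensive.
Import Order.TTheory GRing.Theory Num.Theory.
Local Open Scope ring_scope.
Local Open Scope classical_set_scope.

(* Vectors in R^n are functions 'I_n -> R; index i : 'I_n corresponds to the
   paper's index i+1 (paper indices run from 1 to n). *)

Definition monotone_cone (R : realType) (n : nat) (C : R) : set ('I_n -> R) :=
  [set f | (forall i : 'I_n, - C <= f i /\ f i <= C) /\
           (forall i j : 'I_n, (i <= j)%N -> f i <= f j)].

Definition hplus (R : realType) (n N : nat) (j : nat) : 'I_n -> R :=
  fun i => if (i.+1 <= (j * n) %/ N)%N then 0 else 1.

Definition Hplus (R : realType) (n N : nat) : set ('I_n -> R) :=
  [set h | exists c : 'I_N -> R,
     h = (fun i => \sum_(j < N) c j * @hplus R n N j i)].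

Definition empnorm (R : realType) (n : nat) (v : 'I_n -> R) : R :=
  Num.sqrt ((n%:R)^-1 * \sum_(i < n) v i ^+ 2).

(* Main.v *)
Require Import Defs.
From HB Require Import structures.
From mathcomp Require Import all_boot all_order all_algebra.
From mathcomp Require Import all_classical all_reals.
From mathcomp Require Import lra zify.
Import Order.TTheory GRing.Theory Num.Theory.
Local Open Scope ring_scope.
Local Open Scope classical_set_scope.

Theorem lemma5 (R : realType) (C : R) (n N : nat) :
  0 < C -> (1 <= N)%N -> (N <= n)%N ->
  forall f : 'I_n -> R, monotone_cone C f ->
  inf [set empnorm (fun i => f i - h i) | h in @Hplus R n N] <=
    2 * Num.sqrt 2 * C / Num.sqrt (N%:R).
Proof.
move=> C0 N1 Nn f [fb fm].
have n0 : (0 < n)%N by lia.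
pose b k := (k * n %/ N)%N.
have bmono : forall k l, (k <= l)%N -> (b k <= b l)%N.
  by move=> k l kl; apply: leq_div2r; rewrite leq_mul2r kl orbT.
have b0 : b 0%N = 0%N by rewrite /b mul0n div0n.
have bN : b N = n by rewrite /b mulKn.
have bsz : forall j, ((b j.+1 - b j) * N <= 2 * n)%N.
  move=> j; rewrite /b.
  have h1 := leq_divM (j.+1 * n) N.
  have h2 := divn_eq (j * n) N.
  have h3 := ltn_pmod (j * n) N1.
  move: h1 h2 h3.
  set x := (j.+1 * n %/ N)%N; set y := (j * n %/ N)%N; set z := ((j * n) %% N)%N.
  move=> h1 h2 h3.
  have : (j.+1 * n = j * n + n)%N by rewrite mulSn addnC.
  nia.
have bE : forall k, b k = (k * n %/ N)%N by [].
clearbody b.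
pose fn (k : nat) : R := if insub k is Some i then f i else C.
have fnE : forall i : 'I_n, fn i = f i.
  by move=> i; rewrite /fn valK.
have fnb : forall k, - C <= fn k <= C.
  move=> k; rewrite /fn; case: insubP => [i _ _|_]; first by case: (fb i) => -> ->.
  by apply/andP; split; lra.
have fnm : forall k l, (k <= l)%N -> fn k <= fn l.
  move=> k l kl; rewrite /fn; case: insubP => [i ki ei|kn];
    case: insubP => [j lj ej|ln].
  - by apply: fm; rewrite ei ej.
  - by case: (fb i).
  - by exfalso; move: kn lj; rewrite ltnNge negbK => kn lj; lia.
  - by [].
pose g j := fn (b j).
have gN : g N = C by rewrite /g bN /fn insubN // ltnn.
pose cn k := if k is k'.+1 then g k - g k' else g 0%N.
pose c : 'I_N -> R := fun k => cn k.
pose hn (k : nat) := \sum_(j < N) cn j * (if (k.+1 <= b j)%N then 0 else 1).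
have telg : forall j, \sum_(0 <= k < j.+1) cn k = g j.
  elim=> [|j IH]; first by rewrite big_nat1.
  by rewrite big_nat_recr //= IH addrC subrK.
have hnE : forall j i, (j < N)%N -> (b j <= i < b j.+1)%N -> hn i = g j.
  move=> j i jN /andP[bji ibj].
  rewrite /hn (eq_bigr (fun k : 'I_N => if (k <= j)%N then cn k else 0)); last first.
    move=> k _; case: (leqP k j) => kj.
      have bk := bmono _ _ kj.
      have -> : (i < b k)%N = false by lia.
      by rewrite mulr1.
    move/bmono: kj => bk.
    have -> : (i < b k)%N = true by lia.
    by rewrite mulr0.
  rewrite -(big_mkord xpredT (fun k => if (k <= j)%N then cn k else 0)).
  rewrite (big_cat_nat _ (n:=j.+1)) //=.
  rewrite [X in _ + X]big_nat_cond [X in _ + X]big1 ?addr0; last first.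
    move=> k /andP[/andP[jk _] _]; have -> : (k <= j)%N = false by lia.
    by [].
  rewrite -telg big_nat_cond [RHS]big_nat_cond; apply: eq_bigr => k /andP[/andP[_ kj] _].
  by rewrite ifT.
pose D j := g j.+1 - g j.
have gm : forall j k, (j <= k)%N -> g j <= g k.
  by move=> j k jk; apply: fnm; apply: bmono.
have D0 : forall j, 0 <= D j by move=> j; rewrite subr_ge0; apply: gm.
have D2C : forall j, D j <= 2 * C.
  move=> j; have := fnb (b j.+1); have := fnb (b j); rewrite /D /g.
  move=> /andP[? ?] /andP[? ?]; lra.
pose E i := (fn i - hn i) ^+ 2.
have blocks : forall k, \sum_(0 <= i < b k) E i =
    \sum_(0 <= j < k) \sum_(b j <= i < b j.+1) E i.
  elim=> [|k IH]; first by rewrite b0 !big_geq.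
  by rewrite big_nat_recr //= -IH (big_cat_nat _ (n := b k)) //; apply: bmono.
pose h := fun i : 'I_n => \sum_(j < N) c j * @hplus R n N j i.
have Sdef : \sum_(i < n) (f i - h i) ^+ 2 =
    \sum_(0 <= j < N) \sum_(b j <= i < b j.+1) E i.
  rewrite -blocks bN big_mkord; apply: eq_bigr => i _.
  rewrite /E /hn fnE; congr ((_ - _) ^+ 2); apply: eq_bigr => j _.
  by rewrite /hplus bE.
have blk : forall j, (j < N)%N ->
    \sum_(b j <= i < b j.+1) E i <= D j ^+ 2 *+ (b j.+1 - b j).
  move=> j jN; rewrite -sumr_const_nat; apply: ler_sum_nat => i /andP[bji ibj].
  rewrite /E (hnE j i jN); last by apply/andP.
  have h1 : g j <= fn i by apply: fnm.
  have h2 : fn i <= g j.+1 by apply: fnm; apply: ltnW.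
  rewrite /D !expr2; nra.
pose Nr : R := N%:R. pose nr : R := n%:R.
have Nr0 : 0 < Nr by rewrite /Nr ltr0n.
have nr0 : 0 < nr by rewrite /nr ltr0n.
have key : (\sum_(0 <= j < N) D j ^+ 2 *+ (b j.+1 - b j)) * Nr <= 2 * nr * (4 * C ^+ 2).
  rewrite mulr_suml.
  apply: (@le_trans _ _ (\sum_(0 <= j < N) 2 * nr * (2 * C * D j))).
    apply: ler_sum_nat => j _.
    have := bsz j; rewrite -(ler_nat R) natrM natrM -/Nr -/nr => hm.
    rewrite -mulr_natr.
    have m0 : 0 <= ((b j.+1 - b j)%:R : R) by apply: ler0n.
    have := D0 j; have := D2C j => d1 d2.
    have hD : D j ^+ 2 <= 2 * C * D j by rewrite expr2; nra.
    nra.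
  rewrite -mulr_sumr -mulr_sumr telescope_sumr // gN.
  have := fnb (b 0%N); rewrite /g => /andP[? ?].
  rewrite /g ler_pM2l ?mulr_gt0 //; nra.
pose v := fun i => f i - h i.
apply: (@le_trans _ _ (empnorm v)).
  apply: ge_inf.
    by exists 0 => y [h' _ <-]; exact: sqrtr_ge0.
  by exists h => //; exists c.
set T := 2 * Num.sqrt 2 * C / Num.sqrt N%:R.
have T0 : 0 <= T.
  rewrite /T divr_ge0 ?sqrtr_ge0 // mulr_ge0 ?mulr_ge0 ?sqrtr_ge0 //; lra.
rewrite -[T]ger0_norm // -sqrtr_sqr /empnorm ler_sqrt ?sqr_ge0 //.
rewrite /T expr_div_n !exprMn !sqr_sqrtr ?ler0n // -/nr -/Nr.
rewrite ler_pdivrMl // mulrA ler_pdivlMr //.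
rewrite /v Sdef.
have hs : \sum_(0 <= j < N) \sum_(b j <= i < b j.+1) E i <=
    \sum_(0 <= j < N) D j ^+ 2 *+ (b j.+1 - b j).
  by apply: ler_sum_nat => j /andP[_ jN]; exact: blk.
have : (\sum_(0 <= j < N) \sum_(b j <= i < b j.+1) E i) * Nr <=
   (\sum_(0 <= j < N) D j ^+ 2 *+ (b j.+1 - b j)) * Nr.
  by rewrite ler_wpM2r // ltW.
move: key; set A := (\sum_(0 <= j < N) D j ^+ 2 *+ _) * Nr.
move=> key hA; apply: le_trans hA _; apply: le_trans key _.
rewrite expr2; lra.
Qed.
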